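(* Let $\boldsymbol X=A\times_{\max}\boldsymbol Z$ be a recursive max-linear model on a DAG $\mathcal D=(V,E)$ satisfying Assumptions A, and fix any $a>1$. A node $j\in V$ is a source node (i.e. $\mathrm{pa}(j)=\emptyset$) if and only if $$\sigma^2_{M_{i,aj}}-\sigma^2_{M_{ij}}=(a^2-1)\sigma_i^2=a^2-1\quad\text{for all } i\in V\setminus\{j\}.$$ Moreover, if $j$ is not a source node, then $\sigma^2_{M_{i,aj}}-\sigma^2_{M_{ij}}\le a^2-1$ for all $i\neq j$, with strict inequality whenever $i\in\mathrm{an}(j)$.
   Context: Let $\mathcal D=(V,E)$ be a directed acyclic graph with $V=\{1,\dots,d\}$; $\mathrm{pa}(i)$, $\mathrm{an}(i)$, $\mathrm{de}(i)$ denote parents, ancestors (nodes with a directed path to $i$) and descendants of $i$, $\mathrm{An}(i)=\mathrm{an}(i)\cup\{i\}$; $\vee$ denotes maximum. A recursive max-linear model (RMLM) on $\mathcal D$ is the unique solution of $X_i=\bigvee_{k\in\mathrm{pa}(i)}c_{ik}X_k\vee c_{ii}Z_i$, $i\in V$, with edge weights $c_{ik}>0$ ($k\in \mathrm{pa}(i)$), $c_{ii}>0$; it equals $X_i=(A\times_{\max}\boldsymbol Z)_i=\bigvee_{j\in V}a_{ij}Z_j$ where $a_{ii}=c_{ii}$, $a_{ij}$ for $j\in\mathrm{an}(i)$ is the maximum over all directed paths $j=\ell_0\to\ell_1\to\dots\to\ell_m=i$ of $c_{jj}c_{\ell_1\ell_0}\cdots c_{\ell_m\ell_{m-1}}$,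 and $a_{ij}=0$ for $j\notin\mathrm{An}(i)$. Assumptions A: (A1) $Z_1,\dots,Z_d$ are independent, nonnegative, atom-free, with $n\,\mathbb P(n^{-1/2}Z_i>z)\to z^{-2}$ as $n\to\infty$ for all $z>0$; (A2) the norm is the Euclidean norm $\|\cdot\|$; (A3) $A$ is standardised, i.e. each row is divided by its Euclidean norm so that $\sum_{j\in V}a_{ij}^2=1$ for all $i$ (the model is taken as $\boldsymbol X=A\times_{\max}\boldsymbol Z$ with this standardised $A$). Under these assumptions it is known that $a_{ij}>0$ iff $j\in\mathrm{An}(i)$, and $a_{jj}>a_{ij}$ for all $i\neq j$. Angular measure: with columns $\boldsymbol a_k$ of $A$, $\boldsymbol X$ has angular measure $H_{\boldsymbol X}=\sum_{k\in V}\|\boldsymbol a_k\|^2\delta_{\boldsymbol a_k/\|\boldsymbol a_k\|}$ on $\Theta^{d-1}_+=\{\boldsymbol\omega\in[0,\infty)^d:\|\boldsymbol\omega\|=1\}$. For weights $b_1,\dots,b_d\ge0$, the squared scaling of the max-projection $Y=\bigvee_k b_kX_k$ is $\sigma_Y^2=\int_{\Theta^{d-1}_+}\bigvee_k b_k^2\omega_k^2\,dH_{\boldsymbol X}(\boldsymbol\omega)$; $\sigma_i^2:=\sigma^2_{X_i}$. Notation: $M_{i,aj}=X_i\vee aX_j$, $M_{ij}=X_i\vee X_j$. *)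

(* Defs.v *)
From mathcomp Require Import all_boot all_order all_algebra.
Set Implicit Arguments. Unset Strict Implicit. Unset Printing Implicit Defensive.
Import Order.TTheory GRing.Theory Num.Theory.
Local Open Scope ring_scope.

(* Nodes V = {1..d} are represented by 'I_d.  A DAG is an edge relation
   E : rel 'I_d, where  E k i  means there is an edge k -> i (k is a parent of i). *)

Definition acyclic (d : nat) (E : rel 'I_d) : Prop :=
  forall k i, E k i -> ~~ connect E i k.

Definition source (d : nat) (E : rel 'I_d) (j : 'I_d) : Prop :=
  forall k, ~~ E k j.

Definition ancestor (d : nat) (E : rel 'I_d) (i j : 'I_d) : bool :=
  connect E i j && (i != j).

(* weight c_jj c_{l1 l0} ... c_{lm l(m-1)} of the directed path j = l0 -> l1 -> ... -> lm,
   given as j and the sequence s = [l1; ...; lm] *)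
Definition path_weight (R : numDomainType) (d : nat) (c : 'I_d -> 'I_d -> R)
    (j : 'I_d) (s : seq 'I_d) : R :=
  c j j * \prod_(p <- zip (j :: s) s) c p.2 p.1.

(* In a DAG on d nodes every directed path has fewer
   than d edges, so the maximum over paths with m < d edges is the maximum over all
   directed paths. *)
Definition coef_raw (R : numDomainType) (d : nat) (E : rel 'I_d)
    (c : 'I_d -> 'I_d -> R) (i j : 'I_d) : R :=
  \big[Num.max/0]_(m < d)
     \big[Num.max/0]_(s : m.-tuple 'I_d | path E j s && (last j s == i))
        path_weight c j s.

(* Standardised A (Assumption A3): each row divided by its Euclidean norm. *)
Definition coef (R : rcfType) (d : nat) (E : rel 'I_d)
    (c : 'I_d -> 'I_d -> R) (i j : 'I_d) : R :=
  coef_raw E c i j / Num.sqrt (\sum_(l < d) coef_raw E c i l ^+ 2).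

Definition colnorm (R : rcfType) (d : nat) (A : 'I_d -> 'I_d -> R) (k : 'I_d) : R :=
  Num.sqrt (\sum_(l < d) A l k ^+ 2).

(* sigma_Y^2 for Y = \/_l b_l X_l, computed as the integral of \/_l b_l^2 w_l^2 against
   the angular measure H_X = \sum_k ||a_k||^2 delta_{a_k/||a_k||}. *)
Definition sigma2 (R : rcfType) (d : nat) (A : 'I_d -> 'I_d -> R) (b : 'I_d -> R) : R :=
  \sum_(k < d) colnorm A k ^+ 2 *
     \big[Num.max/0]_(l < d) (b l ^+ 2 * (A l k / colnorm A k) ^+ 2).

(* weights of M_{i,aj} = X_i \/ a X_j  (for i != j) *)
Definition wM {R : numDomainType} {d : nat} (i : 'I_d) (a : R) (j : 'I_d) : 'I_d -> R :=
  fun l => if l == j then a else if l == i then 1 else 0.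

Definition wX {R : numDomainType} {d : nat} (i : 'I_d) : 'I_d -> R :=
  fun l => if l == i then 1 else 0.

(* Main.v *)
Require Import Defs.
From mathcomp Require Import all_boot all_order all_algebra.
From mathcomp Require Import ring lra.
Set Implicit Arguments. Unset Strict Implicit. Unset Printing Implicit Defensive.
Import Order.TTheory GRing.Theory Num.Theory.
Local Open Scope ring_scope.


Lemma bigmax_ge0 (R : realDomainType) (I : Type) (r : seq I) (P : pred I) (F : I -> R) :
  0 <= \big[Num.max/0]_(i <- r | P i) F i.
Proof.
elim: r => [|y r IH]; first by rewrite big_nil.
rewrite big_cons; case: (P y) => //.
by rewrite le_max IH orbT.
Qed.

Lemma bigmax_le (R : realDomainType) (I : Type) (r : seq I) (P : pred I) (F : I -> R) M :
  0 <= M -> (forall i, P i -> F i <= M) -> \big[Num.max/0]_(i <- r | P i) F i <= M.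
Proof.
move=> hM hF; apply: (big_ind (fun x => x <= M)) => // x y hx hy.
by rewrite ge_max hx hy.
Qed.

Lemma le_bigmax (R : realDomainType) (I : eqType) (r : seq I) (P : pred I) (F : I -> R) x :
  x \in r -> P x -> F x <= \big[Num.max/0]_(i <- r | P i) F i.
Proof.
elim: r => [|y r IH] //; rewrite big_cons in_cons => /orP [/eqP <-|xr] Px.
  by rewrite Px le_max lexx.
case: (P y); last exact: IH.
by rewrite le_max IH ?orbT.
Qed.

Lemma bigmax_cases (R : realDomainType) (I : Type) (r : seq I) (P : pred I) (F : I -> R) :
  \big[Num.max/0]_(i <- r | P i) F i = 0 \/
  exists2 i, P i & \big[Num.max/0]_(i <- r | P i) F i = F i.
Proof.
apply: (big_ind (fun x => x = 0 \/ exists2 i, P i & x = F i)); first by left.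
  move=> x y hx hy; rewrite maxEle; by case: (x <= y).
by move=> i Pi; right; exists i.
Qed.

Lemma bigmax_casesP (R : realDomainType) (I : Type) (r : seq I) (P : pred I) (F : I -> R) v :
  v = \big[Num.max/0]_(i <- r | P i) F i -> v = 0 \/ exists2 i, P i & v = F i.
Proof. move=> ->; exact: bigmax_cases. Qed.

Lemma bigmax_eq0 (R : realDomainType) (I : Type) (r : seq I) (P : pred I) (F : I -> R) :
  (forall i, P i -> F i = 0) -> \big[Num.max/0]_(i <- r | P i) F i = 0.
Proof.
move=> h; apply: (big_ind (fun x => x = 0)) => // x y -> ->.
by rewrite maxEle lexx.
Qed.

Lemma max_pM (R : realDomainType) (k x y : R) : 0 < k -> k * Num.max x y = Num.max (k * x) (k * y).
Proof.
move=> hk; rewrite !maxEle ler_pM2l //; by case: (x <= y).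
Qed.


Lemma path_uniq (d : nat) (E : rel 'I_d) (hE : acyclic E) x s :
  path E x s -> uniq (x :: s).
Proof.
elim: s x => [|y s IH] x //= /andP [Exy ps].
have := IH y ps => /= ->; rewrite andbT.
apply/negP => hx.
have := path_connect ps hx.
by move: (hE _ _ Exy) => /negP.
Qed.

Lemma path_size (d : nat) (E : rel 'I_d) (hE : acyclic E) x s :
  path E x s -> (size s < d)%N.
Proof.
move=> ps; have u := path_uniq hE ps.
have := uniq_leq_size u (fun y _ => mem_enum _ y).
by rewrite size_enum_ord.
Qed.

Lemma prod_cat (R : comRingType) (d : nat) (f : 'I_d * 'I_d -> R) x s1 s2 :
  \prod_(p <- zip (x :: s1 ++ s2) (s1 ++ s2)) f p =
  \prod_(p <- zip (x :: s1) s1) f p * \prod_(p <- zip (last x s1 :: s2) s2) f p.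
Proof.
elim: s1 x => [|y s1 IH] x /=; first by rewrite big_nil mul1r.
by rewrite !big_cons IH mulrA.
Qed.

Lemma prod_pos (R : realDomainType) (d : nat) (E : rel 'I_d) (c : 'I_d -> 'I_d -> R)
  (hc_edge : forall i k, E k i -> 0 < c i k) x s :
  path E x s -> 0 < \prod_(p <- zip (x :: s) s) c p.2 p.1.
Proof.
elim: s x => [|y s IH] x /=; first by rewrite big_nil.
case/andP => Exy ps; rewrite big_cons /=.
by rewrite mulr_gt0 // ?hc_edge // IH.
Qed.

Lemma le_raw (R : realDomainType) (d : nat) (E : rel 'I_d) (c : 'I_d -> 'I_d -> R)
  (hE : acyclic E) j s :
  path E j s -> path_weight c j s <= coef_raw E c (last j s) j.
Proof.
move=> ps; have hs := path_size hE ps.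
rewrite /coef_raw.
eapply le_trans; last first.
  apply: (@le_bigmax _ _ _ _ _ (Ordinal hs)); [exact: mem_index_enum|done].
eapply le_trans; last first.
  apply: (@le_bigmax _ _ _ _ _ (in_tuple s)); first exact: mem_index_enum.
  by rewrite /= ps eqxx.
by [].
Qed.

Lemma raw_cases (R : realDomainType) (d : nat) (E : rel 'I_d) (c : 'I_d -> 'I_d -> R) i j :
  coef_raw E c i j = 0 \/
  exists s, [/\ path E j s, last j s = i & coef_raw E c i j = path_weight c j s].
Proof.
have [->|[m _ ->]] := bigmax_casesP (erefl (coef_raw E c i j)); first by left.
have [->|[s /andP [ps /eqP ls] ->]] := bigmax_casesP (erefl
  (\big[Num.max/0]_(s : m.-tuple 'I_d | path E j s && (last j s == i)) path_weight c j s)).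
  by left.
by right; exists s.
Qed.

Lemma raw_ge0 (R : realDomainType) (d : nat) (E : rel 'I_d) (c : 'I_d -> 'I_d -> R) i j :
  0 <= coef_raw E c i j.
Proof. exact: bigmax_ge0. Qed.

Lemma raw_diag (R : realDomainType) (d : nat) (E : rel 'I_d) (c : 'I_d -> 'I_d -> R)
  (hE : acyclic E) i : c i i <= coef_raw E c i i.
Proof.
have := le_raw c hE (s := [::]) (j := i) isT.
by rewrite /path_weight /= big_nil mulr1.
Qed.

Lemma raw_noconn (R : realDomainType) (d : nat) (E : rel 'I_d) (c : 'I_d -> 'I_d -> R) i j :
  ~~ connect E j i -> coef_raw E c i j = 0.
Proof.
move=> nc; case: (raw_cases E c i j) => // [[s [ps ls _]]].
by move: nc; rewrite (_ : connect E j i) //; apply/connectP; exists s.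
Qed.

Lemma anc_noconn (d : nat) (E : rel 'I_d) (hE : acyclic E) i j :
  i != j -> connect E i j -> ~~ connect E j i.
Proof.
move=> nij cij; apply/negP => /connectP [[|y p]] /=.
  by move=> _ eij; move: nij; rewrite eij eqxx.
case/andP => Ejy pyp lp.
have cyj : connect E y j.
  apply: connect_trans cij; apply/connectP; by exists p.
by move: (hE _ _ Ejy); rewrite cyj.
Qed.

Lemma raw_source (R : realDomainType) (d : nat) (E : rel 'I_d) (c : 'I_d -> 'I_d -> R) j k :
  source E j -> k != j -> coef_raw E c j k = 0.
Proof.
move=> sj nkj; case: (raw_cases E c j k) => // [[s [ps ls _]]].
move: ps ls; case/lastP: s => [|p y] /=.
  by move=> _ ekj; move: nkj; rewrite ekj eqxx.
rewrite rcons_path last_rcons => /andP [_ Ey] eyj.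
by move: (sj (last k p)); rewrite -eyj Ey.
Qed.

Lemma raw_concat (R : realDomainType) (d : nat) (E : rel 'I_d) (c : 'I_d -> 'I_d -> R)
  (hE : acyclic E) (hc_diag : forall i, 0 < c i i) i j l :
  coef_raw E c i l * coef_raw E c j i <= c i i * coef_raw E c j l.
Proof.
case: (raw_cases E c i l) => [->|[s1 [p1 l1 ->]]].
  by rewrite mul0r mulr_ge0 ?raw_ge0 // ltW.
case: (raw_cases E c j i) => [->|[s2 [p2 l2 ->]]].
  by rewrite mulr0 mulr_ge0 ?raw_ge0 // ltW.
have p12 : path E l (s1 ++ s2) by rewrite cat_path p1 l1 p2.
have := le_raw c hE p12; rewrite last_cat l1 l2 => h.
apply: le_trans (ler_wpM2l (ltW (hc_diag i)) h).
rewrite /path_weight prod_cat l1.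
by rewrite le_eqVlt; apply/orP; left; apply/eqP; ring.
Qed.

Lemma raw_anc_pos (R : realDomainType) (d : nat) (E : rel 'I_d) (c : 'I_d -> 'I_d -> R)
  (hE : acyclic E) (hc_edge : forall i k, E k i -> 0 < c i k)
  (hc_diag : forall i, 0 < c i i) i j :
  connect E i j -> 0 < coef_raw E c j i.
Proof.
case/connectP => p pp ->.
apply: lt_le_trans (le_raw c hE pp).
by rewrite /path_weight mulr_gt0 // (prod_pos hc_edge pp).
Qed.

Lemma S_pos (R : rcfType) (d : nat) (E : rel 'I_d) (c : 'I_d -> 'I_d -> R)
  (hE : acyclic E) (hc_diag : forall i, 0 < c i i) i :
  0 < \sum_(l < d) coef_raw E c i l ^+ 2.
Proof.
rewrite (bigD1 i) //=.
have h1 : 0 < coef_raw E c i i ^+ 2.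
  by rewrite exprn_gt0 // (lt_le_trans (hc_diag i) (raw_diag c hE i)).
have h2 : 0 <= \sum_(l < d | l != i) coef_raw E c i l ^+ 2.
  by apply: sumr_ge0 => l _; exact: sqr_ge0.
lra.
Qed.

Lemma coef_row (R : rcfType) (d : nat) (E : rel 'I_d) (c : 'I_d -> 'I_d -> R)
  (hE : acyclic E) (hc_diag : forall i, 0 < c i i) i :
  \sum_(l < d) coef E c i l ^+ 2 = 1.
Proof.
rewrite /coef; under eq_bigr do rewrite expr_div_n.
have hS := @S_pos _ _ E c hE hc_diag i.
rewrite -mulr_suml sqr_sqrtr ?ltW // divff //.
by rewrite gt_eqF.
Qed.

Lemma coef_ge0 (R : rcfType) (d : nat) (E : rel 'I_d) (c : 'I_d -> 'I_d -> R) i j :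
  0 <= coef E c i j.
Proof. by rewrite /coef divr_ge0 ?raw_ge0 ?sqrtr_ge0. Qed.

Lemma sigma2E (R : rcfType) (d : nat) (A : 'I_d -> 'I_d -> R) b :
  sigma2 A b = \sum_(k < d) \big[Num.max/0]_(l < d) (b l ^+ 2 * A l k ^+ 2).
Proof.
rewrite /sigma2; apply: eq_bigr => k _.
set n := colnorm A k.
have [n0|n0] := eqVneq n 0.
  have hA : forall l, A l k = 0.
    have hs : \sum_(l < d) A l k ^+ 2 = 0.
      apply/eqP; rewrite eq_le sumr_ge0 ?andbT; last by move=> l _; exact: sqr_ge0.
      by rewrite -sqrtr_eq0; apply/eqP.
    move=> l; have := psumr_eq0P (fun l _ => sqr_ge0 (A l k)) hs (i := l) isT.
    by move/eqP; rewrite sqrf_eq0 => /eqP.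
  rewrite n0 expr0n mul0r; symmetry; apply: bigmax_eq0 => l _.
  by rewrite hA expr0n mulr0.
have hn : 0 < n ^+ 2 by rewrite exprn_gt0 // lt_def n0 sqrtr_ge0.
rewrite (big_morph (fun y => n ^+ 2 * y) (id1 := 0) (op1 := Num.max)
   (fun x y => max_pM x y hn) (mulr0 _)).
apply: eq_bigr => l _.
rewrite expr_div_n mulrCA; congr (_ * _).
by rewrite mulrC divfK // gt_eqF.
Qed.

Lemma maxM (R : rcfType) (d : nat) (A : 'I_d -> 'I_d -> R) i j (a : R) k :
  i != j -> \big[Num.max/0]_(l < d) (wM i a j l ^+ 2 * A l k ^+ 2)
            = Num.max (a ^+ 2 * A j k ^+ 2) (A i k ^+ 2).
Proof.
move=> nij; apply/le_anti/andP; split.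
  apply: bigmax_le; first by rewrite le_max sqr_ge0 orbT.
  move=> l _; rewrite /wM.
  case: eqP => [->|_]; first by rewrite le_max lexx.
  case: eqP => [->|_]; first by rewrite expr1n mul1r le_max lexx orbT.
  by rewrite expr0n mul0r le_max sqr_ge0 orbT.
rewrite ge_max; apply/andP; split.
  have h := @le_bigmax _ _ (index_enum 'I_d) (fun _ => true)
     (fun l => wM i a j l ^+ 2 * A l k ^+ 2) j (mem_index_enum j) isT.
  have e : wM i a j j = a by rewrite /wM eqxx.
  by move: h; rewrite /= e.
have h := @le_bigmax _ _ (index_enum 'I_d) (fun _ => true)
   (fun l => wM i a j l ^+ 2 * A l k ^+ 2) i (mem_index_enum i) isT.
have e : wM i a j i = 1 by rewrite /wM (negbTE nij) eqxx.
by move: h; rewrite /= e expr1n mul1r.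
Qed.

Lemma maxX (R : rcfType) (d : nat) (A : 'I_d -> 'I_d -> R) i k :
  \big[Num.max/0]_(l < d) ((wX i : _ -> R) l ^+ 2 * A l k ^+ 2) = A i k ^+ 2.
Proof.
apply/le_anti/andP; split.
  apply: bigmax_le; first exact: sqr_ge0.
  move=> l _; rewrite /wX.
  case: eqP => [->|_]; first by rewrite expr1n mul1r.
  by rewrite expr0n mul0r sqr_ge0.
have h := @le_bigmax _ _ (index_enum 'I_d) (fun _ => true)
   (fun l => (wX i : _ -> R) l ^+ 2 * A l k ^+ 2) i (mem_index_enum i) isT.
have e : (wX i : _ -> R) i = 1 by rewrite /wX eqxx.
by move: h; rewrite /= e expr1n mul1r.
Qed.

Lemma sq_le (R : rcfType) (u v : R) : 0 <= u -> u <= v -> u ^+ 2 <= v ^+ 2.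
Proof. move=> hu huv; rewrite !expr2; nra. Qed.

Lemma sq_lt (R : rcfType) (u v : R) : 0 <= u -> u < v -> u ^+ 2 < v ^+ 2.
Proof. move=> hu huv; rewrite !expr2; nra. Qed.

Lemma sq_lt_inv (R : rcfType) (u v : R) : 0 <= u -> 0 <= v -> u ^+ 2 < v ^+ 2 -> u < v.
Proof. move=> hu hv; rewrite !expr2 => h; nra. Qed.

Lemma key (R : rcfType) (d : nat) (E : rel 'I_d) (c : 'I_d -> 'I_d -> R)
  (hE : acyclic E) (hc_edge : forall i k, E k i -> 0 < c i k)
  (hc_diag : forall i, 0 < c i i) i j :
  ancestor E i j -> 0 < coef E c j i /\ coef E c j i < coef E c i i.
Proof.
case/andP => cij nij.
have rji : 0 < coef_raw E c j i := @raw_anc_pos _ _ E c hE hc_edge hc_diag i j cij.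
have hSi := @S_pos _ _ E c hE hc_diag i.
have hSj := @S_pos _ _ E c hE hc_diag j.
have rij : coef_raw E c i j = 0 := raw_noconn c (anc_noconn hE nij cij).
have s1 : coef_raw E c j i ^+ 2 * (\sum_(l < d) coef_raw E c i l ^+ 2)
          < c i i ^+ 2 * (\sum_(l < d) coef_raw E c j l ^+ 2).
  rewrite !mulr_sumr (bigD1 j) //= [X in _ < X](bigD1 j) //=.
  apply: ltr_leD.
    rewrite rij expr0n mulr0 mulr_gt0 // exprn_gt0 //.
    exact: lt_le_trans (hc_diag j) (raw_diag c hE j).
  apply: ler_sum => l _.
  rewrite -!exprMn mulrC; apply: sq_le.
    by rewrite mulr_ge0 ?raw_ge0.
  exact: raw_concat.
have s2 : coef_raw E c j i * Num.sqrt (\sum_(l < d) coef_raw E c i l ^+ 2)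
          < c i i * Num.sqrt (\sum_(l < d) coef_raw E c j l ^+ 2).
  apply: sq_lt_inv.
  - by rewrite mulr_ge0 ?raw_ge0 ?sqrtr_ge0.
  - by rewrite mulr_ge0 ?sqrtr_ge0 // ltW.
  by rewrite !exprMn !sqr_sqrtr ?ltW.
split.
  by rewrite /coef divr_gt0 // sqrtr_gt0.
rewrite /coef ltr_pdivrMr ?sqrtr_gt0 // mulrAC ltr_pdivlMr ?sqrtr_gt0 //.
apply: lt_le_trans s2 _.
by rewrite ler_wpM2r ?sqrtr_ge0 // raw_diag.
Qed.

Lemma source_row (R : rcfType) (d : nat) (E : rel 'I_d) (c : 'I_d -> 'I_d -> R)
  (hE : acyclic E) (hc_diag : forall i, 0 < c i i) j :
  source E j -> coef E c j j = 1 /\ forall k, k != j -> coef E c j k = 0.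
Proof.
move=> sj; split; last first.
  by move=> k nkj; rewrite /coef raw_source // mul0r.
have hS : \sum_(l < d) coef_raw E c j l ^+ 2 = coef_raw E c j j ^+ 2.
  rewrite (bigD1 j) //= big1 ?addr0 // => l nl.
  by rewrite raw_source // expr0n.
have hp : 0 < coef_raw E c j j := lt_le_trans (hc_diag j) (raw_diag c hE j).
by rewrite /coef hS sqrtr_sqr ger0_norm ?ltW // divff // gt_eqF.
Qed.

Lemma T1 (R : rcfType) (b x y : R) : 1 <= b -> 0 <= x -> 0 <= y ->
  Num.max (b * x) y - Num.max x y <= (b - 1) * x.
Proof. move=> hb hx hy; rewrite !maxEle; case: (leP (b * x) y) => h1; case: (leP x y) => h2; nra. Qed.

Lemma T2 (R : rcfType) (b x y : R) : 1 < b -> 0 < x -> x < y ->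
  Num.max (b * x) y - Num.max x y < (b - 1) * x.
Proof. move=> hb hx hy; rewrite !maxEle; case: (leP (b * x) y) => h1; case: (leP x y) => h2; nra. Qed.

Lemma T3 (R : rcfType) (b x y : R) : 1 <= b -> 0 <= x -> y <= x ->
  Num.max (b * x) y - Num.max x y = (b - 1) * x.
Proof. move=> hb hx hy; rewrite !maxEle; case: (leP (b * x) y) => h1; case: (leP x y) => h2; nra. Qed.

Lemma T4 (R : rcfType) (b x y : R) : x = 0 ->
  Num.max (b * x) y - Num.max x y = (b - 1) * x.
Proof. by move=> ->; rewrite !mulr0 subrr. Qed.

Theorem theorem4p2 (R : rcfType) (d : nat) (E : rel 'I_d)
    (c : 'I_d -> 'I_d -> R)
    (hE : acyclic E)
    (hc_edge : forall i k, E k i -> 0 < c i k)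
    (hc_diag : forall i, 0 < c i i)
    (a : R) (ha : 1 < a) (j : 'I_d) :
  let A := coef E c in
  (source E j <->
     (forall i, i != j ->
        sigma2 A (wM i a j) - sigma2 A (wM i 1 j) = (a ^+ 2 - 1) * sigma2 A ((wX i : _ -> R))
        /\ (a ^+ 2 - 1) * sigma2 A ((wX i : _ -> R)) = a ^+ 2 - 1))
  /\
  (~ source E j ->
     forall i, i != j ->
        sigma2 A (wM i a j) - sigma2 A (wM i 1 j) <= a ^+ 2 - 1
        /\ (ancestor E i j ->
              sigma2 A (wM i a j) - sigma2 A (wM i 1 j) < a ^+ 2 - 1)).
Proof.
cbv zeta.
have hrow := fun i => @coef_row _ _ E c hE hc_diag i.
have hX : forall i, sigma2 (coef E c) ((wX i : _ -> R)) = 1.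
  move=> i; rewrite sigma2E; under eq_bigr do rewrite maxX; exact: hrow.
have hD : forall i, i != j ->
   sigma2 (coef E c) (wM i a j) - sigma2 (coef E c) (wM i 1 j) =
   \sum_(k < d) (Num.max (a ^+ 2 * coef E c j k ^+ 2) (coef E c i k ^+ 2)
                  - Num.max (coef E c j k ^+ 2) (coef E c i k ^+ 2)).
  move=> i nij; rewrite !sigma2E -sumrB; apply: eq_bigr => k _.
  by rewrite !maxM // expr1n mul1r.
have hb : 1 < a ^+ 2 by rewrite expr2; nra.
have hle : forall i, i != j ->
   sigma2 (coef E c) (wM i a j) - sigma2 (coef E c) (wM i 1 j) <= a ^+ 2 - 1.
  move=> i nij; rewrite hD // [X in _ <= X](_ : _ = (a ^+ 2 - 1) * \sum_(l < d) coef E c j l ^+ 2);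
    last by rewrite hrow mulr1.
  rewrite mulr_sumr.
  by apply: ler_sum => k _; apply: T1; rewrite ?sqr_ge0 // ltW.
have hlt : forall i, i != j -> ancestor E i j ->
   sigma2 (coef E c) (wM i a j) - sigma2 (coef E c) (wM i 1 j) < a ^+ 2 - 1.
  move=> i nij anc; rewrite hD // [X in _ < X](_ : _ = (a ^+ 2 - 1) * \sum_(l < d) coef E c j l ^+ 2);
    last by rewrite hrow mulr1.
  rewrite mulr_sumr.
  rewrite (bigD1 i) //= [X in _ < X](bigD1 i) //=.
  have [hp hk] := key hE hc_edge hc_diag anc.
  apply: ltr_leD.
    apply: T2 => //; first by rewrite exprn_gt0.
    by apply: sq_lt; rewrite // ltW.
  by apply: ler_sum => k _; apply: T1; rewrite ?sqr_ge0 // ltW.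
split; last by move=> _ i nij; split; [exact: hle | exact: hlt].
split.
  move=> sj i nij.
  have [h1 h0] := source_row hE hc_diag sj.
  have e : sigma2 (coef E c) (wM i a j) - sigma2 (coef E c) (wM i 1 j)
           = (a ^+ 2 - 1) * 1.
    rewrite hD // -{2}(hrow j) mulr_sumr; apply: eq_bigr => k _.
    case: (eqVneq k j) => [->|nkj].
      apply: T3; [exact: ltW | exact: sqr_ge0 |].
      rewrite h1 expr1n -(hrow i) (bigD1 j) //= lerDl.
      by apply: sumr_ge0 => l _; exact: sqr_ge0.
    by apply: T4; rewrite h0 // expr0n.
  by rewrite e hX mulr1; split.
move=> H.
case: (boolP [exists k, E k j]) => [/existsP [k Ekj]|/existsPn hn]; last first.
  by move=> k; exact: hn k.
have nkj : k != j.
  by apply/eqP => ekj; move: (hE _ _ Ekj); rewrite ekj connect0.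
have anc : ancestor E k j by rewrite /ancestor connect1 // nkj.
have [e _] := H k nkj.
by move: (hlt k nkj anc); rewrite e hX mulr1 ltxx.
Qed.
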